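(* Let $q$ be a prime power, $n$ a positive integer, $L(x)=\sum_{i=0}^{n-1}a_ix^{q^{2i}}$ with $a_i\in\mathbb F_{q^{2n}}$, and let $r=n-\dim\ker(L^*+L)$. Then \[\mathcal S(L)=\sum_{u\in\mathbb F_{q^{2n}}}\psi(\rho_L(u))=(-1)^rq^{2n-r}.\]
   Context: $\mathrm{Tr}$ is the trace $\mathbb F_{q^{2n}}\to\mathbb F_{q^2}$; $\sigma_L(u,v)=\mathrm{Tr}(uL(v^q))$; $\rho_L(u)=\sigma_L(u,u)^q+\sigma_L(u,u)\in\mathbb F_q$. $\psi$ is the canonical additive character of $\mathbb F_q$. $L^*(x)=\sum_{i=0}^{n-1}(a_i^qx)^{q^{2(n-i-1)}}$. Kernels are of the induced $\mathbb F_{q^2}$-linear maps on $\mathbb F_{q^{2n}}$, dimensions over $\mathbb F_{q^2}$. *)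

(* Defs.v *)
From HB Require Import structures.
From mathcomp Require Import all_boot all_order all_algebra all_field.
Set Implicit Arguments. Unset Strict Implicit. Unset Printing Implicit Defensive.
Import GRing.Theory Num.Theory.
Local Open Scope ring_scope.

(* Setting: F = F_{q^2} (a finite field of order q^2), K = F_{q^{2n}} given as
   a field extension of F of dimension n.  All maps below are on K. *)

Section Defs.
Variables (F : fieldType) (K : fieldExtType F).

Definition Lpoly (q n : nat) (a : 'I_n -> K) (x : K) : K :=
  \sum_(i < n) a i * x ^+ (q ^ (2 * i)).

Definition Lstar (q n : nat) (a : 'I_n -> K) (x : K) : K :=
  \sum_(i < n) (a i ^+ q * x) ^+ (q ^ (2 * (n - i - 1))).

Definition Tr (q n : nat) (x : K) : K := \sum_(j < n) x ^+ (q ^ (2 * j)).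

Definition sigmaL (q n : nat) (a : 'I_n -> K) (u v : K) : K :=
  Tr q n (u * Lpoly q a (v ^+ q)).

Definition rhoL (q n : nat) (a : 'I_n -> K) (u : K) : K :=
  sigmaL q a u u ^+ q + sigmaL q a u u.

Definition absTr (p k : nat) (y : K) : K := \sum_(j < k) y ^+ (p ^ j).

(* the canonical additive character of F_q (q = p^k):
   psi(y) = exp(2 pi i Tr_{F_q/F_p}(y) / p), where Tr_{F_q/F_p}(y) = m%:R with
   0 <= m < p; exp(2 pi i / p) = (p.-root (-1))^+2 in algC *)
Definition omega (p : nat) : algC := (p.-root (-1)) ^+ 2.

Definition psi (p k : nat) (y : K) : algC :=
  \sum_(m < p) (if absTr p k y == m%:R then omega p ^+ m else 0).

Definition kerLL (q n : nat) (a : 'I_n -> K) : {vspace K} :=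
  lker (linfun (fun x : K => Lstar q a x + Lpoly q a x)).

End Defs.

(* Main.v *)
Require Import Defs.
From HB Require Import structures.
From mathcomp Require Import all_boot all_order all_algebra all_field.
From mathcomp Require Import zify ring.
From mathcomp Require Import cyclic.
Import GRing.Theory Num.Theory.
Local Open Scope ring_scope.
Set Implicit Arguments. Unset Strict Implicit. Unset Printing Implicit Defensive.

Section Frob.
Variables (R : comNzRingType) (p : nat).
Hypothesis chp : p \in [pchar R].

Definition fp (e : nat) (x : R) : R := x ^+ (p ^ e).

Lemma fp_zmod e : zmod_morphism (fp e).
Proof.
elim: e => [|e IH] x y; first by rewrite /fp expn0 !expr1.
rewrite /fp expnS mulnC !exprM -!/(fp e _) IH.
by rewrite -!(pFrobenius_autE chp) rmorphB.
Qed.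
Lemma fp_mul e : monoid_morphism (fp e).
Proof. by split; [rewrite /fp expr1n | move=> x y; rewrite /fp exprMn]. Qed.
Lemma fpE e x : fp e x = x ^+ (p ^ e). Proof. by []. Qed.
Lemma fp_comp a b x : fp a (fp b x) = fp (b + a) x.
Proof. by rewrite /fp -exprM -expnD. Qed.
End Frob.


Lemma sum_blocks (V : nmodType) t m (f : nat -> V) :
  \sum_(l < t * m) f l = \sum_(i < t) \sum_(j < m) f (i * m + j)%N.
Proof.
elim: t => [|t IH]; first by rewrite mul0n !big_ord0.
rewrite mulSnr big_split_ord /= IH big_ord_recr /=.
by congr (_ + _); apply: eq_bigr => j _.
Qed.

Lemma shift_sum (V : zmodType) m (f : nat -> V) :
  f m = f 0%N -> \sum_(i < m) f i.+1 = \sum_(i < m) f i.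
Proof.
move=> h.
have e1 : \sum_(i < m.+1) f i = f 0%N + \sum_(i < m) f i.+1 := big_ord_recl _ _.
have e2 : \sum_(i < m.+1) f i = \sum_(i < m) f i + f m := big_ord_recr _ _.
rewrite e1 h addrC in e2.
by apply: (addIr (f 0%N)).
Qed.

Lemma periodic_sum (V : zmodType) t M (h : nat -> V) :
  (forall i, h (i + M)%N = h i) -> \sum_(l < t * M) h l = (\sum_(i < M) h i) *+ t.
Proof.
move=> hM; rewrite sum_blocks.
have e : forall i j, h (i * M + j)%N = h j.
  elim=> [|i IH] j; first by rewrite mul0n add0n.
  by rewrite mulSn -addnA addnC hM IH.
under eq_bigr => i _ do under eq_bigr => j _ do rewrite e.
by rewrite sumr_const card_ord.
Qed.

Lemma few_roots (R : idomainType) (P : {poly R}) (s : seq R) :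
  P != 0 -> uniq s -> (size P <= size s)%N -> exists2 x, x \in s & ~~ root P x.
Proof.
move=> P0 us hs; case: (boolP (all (root P) s)) => [hall|].
  by have := max_poly_roots P0 hall us; rewrite ltnNge hs.
by move=> /allPn [x xs nr]; exists x.
Qed.

Lemma dvd_pow1 x m : (0 < x)%N -> ((x - 1) %| (x ^ m - 1))%N.
Proof.
move=> x0; elim: m => [|m IH]; first by rewrite expn0 subnn dvdn0.
have h : (x ^ m.+1 - 1 = x * (x ^ m - 1) + (x - 1))%N.
  have y0 : (0 < x ^ m)%N by rewrite expn_gt0 x0.
  rewrite expnS; move: (x ^ m)%N y0 => y y0; nia.
by rewrite h dvdn_add // dvdn_mull.
Qed.

Section Main.
Variables (F : finFieldType) (K : fieldExtType F) (p k n : nat).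
Hypotheses (hp : prime p) (hchar : p \in [pchar F]) (hk : (0 < k)%N) (hn : (0 < n)%N)
    (hF : #|F| = ((p ^ k) ^ 2)%N) (hdim : \dim {: K} = n).
Variable a : 'I_n -> K.
Local Notation q := (p ^ k)%N.
Local Notation KF := (finvect_type K).

Lemma chK : p \in [pchar K]. Proof. by rewrite (pchar_lalg K). Qed.
Lemma p_gt1 : (1 < p)%N. Proof. exact: prime_gt1. Qed.
Lemma q_gt1 : (1 < q)%N. Proof. by rewrite -(expn0 p) ltn_exp2l ?p_gt1. Qed.

Lemma cardK : #|KF| = (q ^ (2 * n))%N.
Proof.
have h1 := @card_vspacef F KF (Vector.class KF).
have h2 := @card_vspace F KF (Vector.class KF) fullv.
rewrite -h1 h2 hF.
have -> : \dim (fullv : {vspace KF}) = n by exact: hdim.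
by rewrite -expnM.
Qed.

HB.instance Definition _ e := GRing.isZmodMorphism.Build K K (fp p e) (fp_zmod chK e).
HB.instance Definition _ e := GRing.isMonoidMorphism.Build K K (fp p e) (@fp_mul K p e).

Lemma qpow j (x : K) : x ^+ (q ^ j) = fp p (k * j) x.
Proof. by rewrite fpE expnM. Qed.

Lemma fixK (x : K) : fp p (k * (2 * n)) x = x.
Proof. by rewrite -qpow -cardK; exact: (expf_card (x : KF)). Qed.


Lemma qpow1 (x : K) : x ^+ q = fp p k x. Proof. by []. Qed.

Lemma fp_mod e (x : K) : fp p e x = fp p (e %% (k * (2 * n))) x.
Proof.
rewrite {1}(divn_eq e (k * (2 * n))).
set M := (k * (2 * n))%N; set r := (e %% M)%N.
elim: (e %/ M)%N => [|t IH]; first by rewrite mul0n add0n.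
have -> : (t.+1 * M + r = (t * M + r) + M)%N by rewrite mulSn; lia.
by rewrite -fp_comp fixK.
Qed.

Definition Tabs (x : K) : K := \sum_(i < 2 * n) x ^+ (q ^ i).

Lemma Tabs_zmod : zmod_morphism Tabs.
Proof.
intros x y; rewrite /Tabs -sumrB; apply: eq_bigr => i _.
by rewrite !qpow rmorphB.
Qed.
HB.instance Definition _ := GRing.isZmodMorphism.Build K K Tabs Tabs_zmod.

Lemma Lpoly_zmod : zmod_morphism (Lpoly q a).
Proof.
intros x y; rewrite /Lpoly -sumrB; apply: eq_bigr => i _.
by rewrite !qpow rmorphB mulrBr.
Qed.
HB.instance Definition _ := GRing.isZmodMorphism.Build K K (Lpoly q a) Lpoly_zmod.

Lemma Lstar_zmod : zmod_morphism (Lstar q a).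
Proof.
intros x y; rewrite /Lstar -sumrB; apply: eq_bigr => i _.
by rewrite !qpow mulrBr rmorphB.
Qed.
HB.instance Definition _ := GRing.isZmodMorphism.Build K K (Lstar q a) Lstar_zmod.

Lemma Tabs_q (x : K) : Tabs (fp p k x) = Tabs x.
Proof.
rewrite /Tabs; under eq_bigr => i _ do rewrite qpow fp_comp -mulnS.
under [in RHS]eq_bigr => i _ do rewrite qpow.
apply: (@shift_sum _ (2 * n) (fun i => fp p (k * i) x)).
by rewrite fixK muln0.
Qed.

Lemma Tabs_fix (x : K) : fp p k (Tabs x) = Tabs x.
Proof.
rewrite -{2}(Tabs_q x) /Tabs rmorph_sum; apply: eq_bigr => i _.
by rewrite /= !qpow !fp_comp addnC.
Qed.

Lemma TabsX s (x : K) : Tabs (fp p (k * s) x) = Tabs x.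
Proof.
elim: s => [|s IH]; first by rewrite muln0.
by rewrite mulnSr -fp_comp Tabs_q IH.
Qed.


Lemma fp_full e (x : K) : e = (k * (2 * n))%N -> fp p e x = x.
Proof. by move=> ->; exact: fixK. Qed.

Lemma TrT (y : K) : fp p k (Tr q n y) + Tr q n y = Tabs y.
Proof.
rewrite /Tabs mulnC (sum_blocks n 2 (fun l => y ^+ (q ^ l))) /Tr rmorph_sum -big_split; apply: eq_bigr => i _.
rewrite !big_ord_recl big_ord0 addr0 /= !qpow fp_comp addrC.
by congr (fp p _ y + fp p _ y); rewrite /bump /=; lia.
Qed.

Lemma rhoE u : rhoL q a u = Tabs (u * Lpoly q a (fp p k u)).
Proof. by rewrite /rhoL /sigmaL qpow1 TrT. Qed.

Lemma adjoint u v :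
  Tabs (v * Lpoly q a (fp p k u)) = Tabs (u * Lstar q a (fp p k v)).
Proof.
rewrite /Lpoly /Lstar !mulr_sumr !raddf_sum; apply: eq_bigr => i _.
have hi := ltn_ord i.
rewrite /= !qpow qpow1 -(TabsX (2 * (n - i - 1)).+1 (v * _)) !rmorphM /= !fp_comp.
have ee : (k + (k * (2 * i) + k * (2 * (n - i - 1)).+1) = k * (2 * n))%N.
  move: (nat_of_ord i) hi => j hj.
  have [t ht] : exists t, n = (j + t).+1 by exists (n - j.+1)%N; lia.
  rewrite ht; have -> : ((j + t).+1 - j - 1 = t)%N by lia.
  nia.
rewrite (fp_full u ee).
have -> : (k * (2 * (n - i - 1)).+1 = k + k * (2 * (n - i - 1)))%N by rewrite mulnSr addnC.
by congr Tabs; rewrite mulrC [_ * u]mulrC mulrA.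
Qed.


Definition gL (x : K) : K := Lstar q a x + Lpoly q a x.
Definition Bf (u v : K) : K := Tabs (u * gL (fp p k v)).

Lemma rhoD u v : rhoL q a (u + v) = rhoL q a u + rhoL q a v + Bf u v.
Proof.
rewrite !rhoE /Bf /gL rmorphD /= raddfD /= mulrDl !mulrDr !raddfD /= (adjoint u v).
ring.
Qed.

Lemma Bf_addl u u' v : Bf (u + u') v = Bf u v + Bf u' v.
Proof. by rewrite /Bf mulrDl raddfD. Qed.

Section Scale.
Variable c : K.
Hypothesis hc : fp p (k * 2) c = c.

Lemma fixc j : fp p (k * (2 * j)) c = c.
Proof.
elim: j => [|j IH]; first by rewrite !muln0.
by rewrite mulnS mulnDr addnC -fp_comp IH hc.
Qed.

Lemma fixc1 : fp p (k * 2) (fp p k c) = fp p k c.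
Proof. by rewrite fp_comp addnC -fp_comp hc. Qed.

Lemma Lpoly_scale x : Lpoly q a (c * x) = c * Lpoly q a x.
Proof.
rewrite /Lpoly mulr_sumr; apply: eq_bigr => i _.
by rewrite !qpow rmorphM /= fixc mulrCA.
Qed.

Lemma Lstar_scale x : Lstar q a (c * x) = c * Lstar q a x.
Proof.
rewrite /Lstar mulr_sumr; apply: eq_bigr => i _.
by rewrite !qpow mulrCA rmorphM /= fixc.
Qed.

Lemma gL_scale x : gL (c * x) = c * gL x.
Proof. by rewrite /gL Lpoly_scale Lstar_scale mulrDr. Qed.

End Scale.

Lemma Tabs_scale d y : fp p k d = d -> Tabs (d * y) = d * Tabs y.
Proof.
move=> hd; rewrite /Tabs mulr_sumr; apply: eq_bigr => i _.
have fi : forall j, fp p (k * j) d = d.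
  by elim=> [|j IH]; [rewrite muln0 | rewrite mulnS addnC -fp_comp IH hd].
by rewrite !qpow rmorphM /= fi.
Qed.

Definition Nm (c : K) := c * fp p k c.

Lemma rho_scale c u : fp p (k * 2) c = c -> rhoL q a (c * u) = Nm c * rhoL q a u.
Proof.
move=> hc; rewrite !rhoE rmorphM /= Lpoly_scale ?fixc1 //.
rewrite -Tabs_scale; first by congr Tabs; rewrite /Nm; ring.
by rewrite /Nm rmorphM /= fp_comp addnn -muln2 hc mulrC.
Qed.

Lemma Nm_fix c : fp p (k * 2) c = c -> fp p (k * 2) (Nm c) = Nm c.
Proof. by move=> hc; rewrite /Nm rmorphM /= hc fixc1. Qed.


Lemma om_p : omega p ^+ p = 1.
Proof.
have p0 : (0 < p)%N by rewrite prime_gt0.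
by rewrite /omega -exprM mulnC exprM rootCK // sqrrN expr1n.
Qed.

Lemma om_prim m : (0 < m)%N -> (m < p)%N -> omega p ^+ m != 1.
Proof.
move=> m0 mp; apply/negP => /eqP hm.
have p0 : (0 < p)%N by rewrite prime_gt0.
have [d hd dp] := prim_order_exists p0 om_p.
have dm : (d %| m)%N by rewrite (prim_order_dvd hd) hm.
have d1 : d = 1%N.
  case/primeP: hp => _ /(_ d dp) /orP [/eqP //|/eqP dP].
  by move: dm; rewrite dP => /(dvdn_leq m0); rewrite leqNgt mp.
have o1 : omega p = 1 by have := prim_expr_order hd; rewrite d1 expr1.
have : (p.-root (-1 : algC)) ^+ 2 = 1 by exact: o1.
move/eqP; rewrite sqrf_eq1 => /orP [/eqP r1|/eqP r1].
  have := rootCK p0 (-1 : algC); rewrite r1 expr1n => /eqP.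
  by rewrite -addr_eq0 -(natrD _ 1 1) pnatr_eq0.
have := rootC_lt0 (-1 : algC) p_gt1; rewrite r1.
by rewrite oppr_lt0 ltr01.
Qed.

Lemma om_Aint : omega p \in Aint.
Proof.
have p0 : (0 < p)%N by rewrite prime_gt0.
by apply: (Aint_unity_root p0); rewrite unity_rootE om_p.
Qed.


Lemma absTr_zmod : zmod_morphism (absTr (K:=K) p k).
Proof.
intros x y; rewrite /absTr -sumrB; apply: eq_bigr => j _.
by rewrite -!fpE rmorphB.
Qed.
HB.instance Definition _ := GRing.isZmodMorphism.Build K K (absTr p k) absTr_zmod.

Lemma absTr_fix (y : K) : fp p k y = y -> fp p 1 (absTr p k y) = absTr p k y.
Proof.
move=> hy; rewrite /absTr rmorph_sum /=.
under eq_bigr => j _ do rewrite -fpE fp_comp addn1.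
under [in RHS]eq_bigr => j _ do rewrite -fpE.
by apply: (@shift_sum _ k (fun j => fp p j y)); rewrite hy.
Qed.

Lemma natr_inj_p m m' : (m < p)%N -> (m' < p)%N -> (m%:R == m'%:R :> K) = (m == m').
Proof.
wlog le : m m' / (m <= m')%N.
  move=> h hm hm'; case: (leqP m m') => [l|l]; first exact: h.
  by rewrite eq_sym h ?(ltnW l) // eq_sym.
move=> hm hm'; apply/idP/idP => [|/eqP -> //].
rewrite eq_sym -subr_eq0 -natrB // -(dvdn_pcharf chK) => hd.
have : (m' - m < p)%N by lia.
move: hd; case E : (m' - m)%N => [|t].
  move=> _ _; apply/eqP. lia.
by move=> /(dvdn_leq (ltn0Sn t)); rewrite leqNgt => /negbTE ->.
Qed.

Lemma nat_frob m : fp p 1 (m%:R : K) = m%:R.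
Proof.
elim: m => [|m IH]; first by rewrite rmorph0.
by rewrite mulrS rmorphD /= IH rmorph1.
Qed.

Lemma absTr_nat (y : K) : fp p k y = y -> exists2 m, (m < p)%N & absTr p k y = m%:R.
Proof.
move=> hy; set x := absTr p k y.
case: (boolP (x \in [seq (m%:R : K) | m <- iota 0 p])).
  by case/mapP => m; rewrite mem_iota add0n => hm ->; exists m.
move=> xn.
pose P : {poly K} := 'X^p - 'X.
have sP : size P = p.+1.
  rewrite /P size_addl ?size_polyXn // size_opp size_polyX ltnS; exact: p_gt1.
have P0 : P != 0 by rewrite -size_poly_eq0 sP.
have us : uniq (x :: [seq (m%:R : K) | m <- iota 0 p]).
  rewrite /= xn map_inj_in_uniq ?iota_uniq //.
  move=> m m'; rewrite !mem_iota !add0n => hm hm' /eqP.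
  by rewrite natr_inj_p // => /eqP.
have hs : (size P <= size (x :: [seq (m%:R : K) | m <- iota 0 p]))%N.
  by rewrite sP /= size_map size_iota.
have [w ws /negP []] := few_roots P0 us hs.
rewrite /root /P !hornerE.
have fr : forall v : K, fp p 1 v = v -> v ^+ p - v == 0.
  by move=> v; rewrite fpE expn1 => ->; rewrite subrr.
move: ws; rewrite inE => /orP [/eqP ->|/mapP [m _ ->]].
  by rewrite fr // absTr_fix.
by rewrite fr // nat_frob.
Qed.

Lemma psi_val (y : K) : fp p k y = y ->
  exists m, [/\ (m < p)%N, absTr p k y = m%:R & psi p k y = omega p ^+ m].
Proof.
move=> hy; have [m hm e] := absTr_nat hy; exists m; split => //.
rewrite /psi (bigD1 (Ordinal hm)) //= e eqxx big1 ?addr0 // => j hj.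
by rewrite natr_inj_p // ifN //; apply: contra hj => /eqP h; apply/eqP/val_inj.
Qed.

Lemma psiD (x y : K) : fp p k x = x -> fp p k y = y -> psi p k (x + y) = psi p k x * psi p k y.
Proof.
move=> hx hy; have hxy : fp p k (x + y) = x + y by rewrite rmorphD /= hx hy.
have [m1 [_ e1 ->]] := psi_val hx; have [m2 [_ e2 ->]] := psi_val hy.
have [m3 [h3 e3 ->]] := psi_val hxy.
rewrite -exprD -(expr_mod _ om_p) -[in RHS](expr_mod _ om_p); congr (_ ^+ _).
have : (m3%:R : K) = ((m1 + m2) %% p)%:R by rewrite (GRing.natr_mod_pchar chK) natrD -e1 -e2 -e3 raddfD.
by move/eqP; rewrite natr_inj_p ?ltn_pmod ?prime_gt0 // => /eqP ->; rewrite modn_mod.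
Qed.

Lemma psi0 : psi p k (0 : K) = 1.
Proof.
have h0 : fp p k (0 : K) = 0 by rewrite rmorph0.
have [m [hm e ->]] := psi_val h0.
have : (m%:R : K) == 0%:R by rewrite -e raddf0.
by rewrite natr_inj_p ?prime_gt0 // => /eqP ->.
Qed.

Lemma psi_ne1 (y : K) : fp p k y = y -> absTr p k y != 0 -> psi p k y != 1.
Proof.
move=> hy ny; have [m [hm e ->]] := psi_val hy; apply: om_prim hm.
by rewrite lt0n; apply: contra ny => /eqP m0; rewrite e m0.
Qed.

Lemma psi_Aint (y : K) : psi p k y \in Aint.
Proof.
rewrite /psi rpred_sum // => j _; case: ifP => _; [exact: rpredX om_Aint|exact: rpred0].
Qed.


Lemma absTabs y : absTr p k (Tabs y) = \sum_(l < (2 * n) * k) fp p l y.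
Proof.
rewrite /absTr /Tabs (sum_blocks (2 * n) k (fun l => fp p l y)) exchange_big /=.
apply: eq_bigr => j _; rewrite -fpE rmorph_sum /=; apply: eq_bigr => i _.
by rewrite qpow fp_comp mulnC.
Qed.

Lemma Tabs_nontriv : exists y0 : K, absTr p k (Tabs y0) != 0.
Proof.
set M := ((2 * n) * k)%N.
have M0 : (0 < M)%N by rewrite /M muln_gt0 hk andbT muln_gt0 hn.
pose P : {poly K} := \sum_(l < M) 'X^(p ^ l).
have hP : forall w : K, P.[w] = \sum_(l < M) fp p l w.
  by move=> w; rewrite /P horner_sum; apply: eq_bigr => l _; rewrite hornerXn.
have P0 : P != 0.
  apply/negP => /eqP P0.
  have : P`_(p ^ M.-1) = 1.
    rewrite /P coef_sum -(prednK M0) big_ord_recr /= coefXn eqxx big1 ?add0r //.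
    move=> l _; rewrite coefXn eqn_exp2l ?p_gt1 //.
    by rewrite gtn_eqF // (prednK M0).
  by rewrite P0 coef0 => /eqP; rewrite eq_sym oner_eq0.
have sP : (size P <= (p ^ M.-1).+1)%N.
  apply: leq_trans (size_sum _ _ _) _; apply/bigmax_leqP => l _.
  rewrite size_polyXn ltnS; apply: leq_pexp2l; first exact: prime_gt0.
  by rewrite -ltnS (prednK M0).
have us : uniq (enum KF : seq K) by exact: enum_uniq.
have hs : (size P <= size (enum KF : seq K))%N.
  apply: leq_trans sP _.
  have -> : size (enum KF : seq K) = #|KF| by rewrite cardT.
  rewrite cardK -expnM mulnC -/M -(prednK M0) expnS (prednK M0).
  have h : (0 < p ^ M.-1)%N by rewrite expn_gt0 prime_gt0.
  have := p_gt1; nia.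
have [w _ nr] := few_roots P0 us hs.
by exists w; rewrite absTabs -hP.
Qed.


Lemma Bf_fix u v : fp p k (Bf u v) = Bf u v. Proof. exact: Tabs_fix. Qed.
Lemma rho_fix u : fp p k (rhoL q a u) = rhoL q a u.
Proof. by rewrite rhoE Tabs_fix. Qed.

Lemma char_sum w : \sum_(v : KF) psi p k (Bf v w) =
  if gL (fp p k w) == 0 then (#|KF|%:R : algC) else 0.
Proof.
case: eqP => [h|/eqP h].
  under eq_bigr => v _ do rewrite /Bf h mulr0 raddf0 psi0.
  by rewrite sumr_const.
have [y0 hy0] := Tabs_nontriv.
set z := gL (fp p k w).
pose v0 : K := y0 / z.
have hv0 : Bf v0 w = Tabs y0 by rewrite /Bf -/z /v0 divfK.
set X := \sum_(v : KF) _.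
have eX : X = X * psi p k (Bf v0 w).
  rewrite {1}/X (reindex_inj (addIr (v0 : KF))) /= mulr_suml.
  by apply: eq_bigr => v _; rewrite Bf_addl psiD ?Bf_fix.
have c1 : psi p k (Bf v0 w) != 1 by rewrite hv0 psi_ne1 ?Tabs_fix.
apply/eqP; move/eqP: eX; rewrite -subr_eq0 -{1}(mulr1 X) -mulrBr mulf_eq0.
by rewrite subr_eq0 [1 == _]eq_sym (negbTE c1) orbF.
Qed.

Lemma rho_rad (c w : K) : fp p (k * 2) c = c -> fp p k c + c != 0 ->
  gL (fp p k w) = 0 -> rhoL q a w = 0.
Proof.
move=> hc nc hw.
have h1 : fp p (k * 2) (1 + c) = 1 + c by rewrite rmorphD rmorph1 /= hc.
have e1 := rho_scale w h1.
have e2 := rhoD w (c * w).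
have eB : Bf w (c * w) = 0.
  by rewrite /Bf rmorphM /= gL_scale ?fixc1 // hw mulr0 mulr0 raddf0.
have e3 : rhoL q a ((1 + c) * w) = rhoL q a w + Nm c * rhoL q a w.
  by rewrite mulrDl mul1r e2 eB addr0 rho_scale.
have : (fp p k c + c) * rhoL q a w = 0.
  move: e1; rewrite e3 /Nm rmorphD rmorph1 /= => e4.
  transitivity ((1 + c) * (1 + fp p k c) * rhoL q a w -
     (rhoL q a w + c * fp p k c * rhoL q a w)); first ring.
  by rewrite -e4 subrr.
by move/eqP; rewrite mulf_eq0 (negbTE nc) /= => /eqP.
Qed.


Lemma inalg_fix (c : F) : fp p (k * 2) (c%:A : K) = c%:A.
Proof.
have hc : c ^+ (p ^ (k * 2)) = c by rewrite expnM -hF expf_card.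
by rewrite fpE exprZn hc expr1n.
Qed.

Lemma gL_zmod : zmod_morphism gL.
Proof. by intros x y; rewrite /gL !raddfB /=; ring. Qed.
HB.instance Definition _ := GRing.isZmodMorphism.Build K K gL gL_zmod.

Lemma gL_scalable : scalable gL.
Proof.
by move=> c x; rewrite -[c *: x]mulr_algl -[c *: gL x]mulr_algl gL_scale // inalg_fix.
Qed.
HB.instance Definition _ := GRing.isScalable.Build F K K *:%R gL gL_scalable.

Lemma card_ker : #|[set x : KF | gL x == 0]| = (q ^ (2 * \dim (kerLL q a)))%N.
Proof.
have -> : [set x : KF | gL x == 0] = [set x : KF | x \in kerLL q a].
  apply/setP => x; rewrite !inE /kerLL memv_ker.
  have -> : linfun (fun x : K => Lstar q a x + Lpoly q a x) = linfun gL by [].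
  by rewrite lfunE.
rewrite cardsE (@card_vspace F KF (Vector.class KF) (kerLL q a)) hF.
by rewrite -expnM.
Qed.

Lemma card_rad : #|[set w : KF | gL (fp p k w) == 0]| = (q ^ (2 * \dim (kerLL q a)))%N.
Proof.
rewrite -card_ker.
have -> : [set w : KF | gL (fp p k w) == 0] =
  (fun w : KF => (fp p k w : KF)) @^-1: [set x : KF | gL x == 0].
  by apply/setP => w; rewrite !inE.
apply: card_preimset; exact: (fmorph_inj (fp p k)).
Qed.


Local Notation N := ((q ^ (2 * n)).-1)%N.

Lemma q2n : (q ^ (2 * n) = N.+1)%N.
Proof. by rewrite prednK // expn_gt0 ltnW ?q_gt1. Qed.

Lemma N_gt0 : (0 < N)%N.
Proof.
have h : (q ^ 1 <= q ^ (2 * n))%N.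
  by apply: leq_pexp2l; [exact: ltnW q_gt1 | rewrite muln_gt0 hn].
rewrite expn1 in h; have h2 := q_gt1; have h3 := q2n; lia.
Qed.

Lemma unitN (x : K) : x != 0 -> x ^+ N = 1.
Proof.
move=> nx; have hxx : x ^+ (q ^ (2 * n)) = x by rewrite qpow fixK.
rewrite q2n exprS in hxx.
by apply: (mulfI nx); rewrite hxx mulr1.
Qed.

Lemma exists_gen : exists z : K, N.-primitive_root z.
Proof.
pose rs : seq K := enum [pred x : KF | x != 0].
have hall : all N.-unity_root rs.
  apply/allP => x hx.
  have nx : x != 0.
    have hx' : (x : KF) \in enum [pred y : KF | y != 0] by exact: hx.
    by rewrite mem_enum in hx'.
  rewrite unity_rootE.
  have hxx : x ^+ (q ^ (2 * n)) = x by rewrite qpow fixK.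
  rewrite q2n exprS in hxx.
  by apply/eqP; apply: (mulfI nx); rewrite hxx mulr1.
have us : uniq rs by exact: enum_uniq.
have sz : (N <= size rs)%N.
  have -> : size rs = #|[pred x : KF | x != 0]| by rewrite fintype.cardE.
  by rewrite (cardC1 (0 : KF)) cardK.
have := has_prim_root N_gt0 hall us sz.
by case/hasP => z _ hz; exists z.
Qed.

Lemma fix_of_pow (c : K) : c ^+ (q ^ 2 - 1) = 1 -> fp p (k * 2) c = c.
Proof.
move=> h; rewrite fpE expnM.
have -> : (q ^ 2 = (q ^ 2 - 1) + 1)%N by rewrite subnK // expn_gt0 ltnW ?q_gt1.
by rewrite exprD h mul1r expr1.
Qed.

Lemma NmE (c : K) : Nm c = c ^+ q.+1.
Proof. by rewrite /Nm exprS. Qed.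

Lemma existsD : exists D, (N = (q ^ 2 - 1) * D)%N.
Proof.
have : ((q ^ 2 - 1) %| (q ^ (2 * n) - 1))%N.
  by rewrite expnM; apply: dvd_pow1; rewrite expn_gt0 ltnW ?q_gt1.
move=> /dvdnP [D hD]; exists D; by rewrite -subn1 hD mulnC.
Qed.


Lemma q_sq : (q ^ 2 - 1 = (q - 1) * q.+1)%N.
Proof. by rewrite -{2}(exp1n 2) subn_sqr addn1. Qed.

Section Gen.
Variable z : K.
Hypothesis hz : N.-primitive_root z.
Variable D : nat.
Hypothesis hD : N = ((q ^ 2 - 1) * D)%N.

Lemma z_ne0 : z != 0.
Proof. by rewrite (prim_root_eq0 hz) -lt0n N_gt0. Qed.

Lemma zD_fix j : fp p (k * 2) (z ^+ (D * j)) = z ^+ (D * j).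
Proof.
apply: fix_of_pow; rewrite -exprM.
have -> : (D * j * (q ^ 2 - 1) = N * j)%N by rewrite hD; ring.
by rewrite exprM (prim_expr_order hz) expr1n.
Qed.

Lemma Nm_zD j : Nm (z ^+ (D * j)) = z ^+ (D * j * q.+1).
Proof. by rewrite NmE -exprM. Qed.

Lemma S_dec : \sum_(u : KF) psi p k (rhoL q a u) =
  1 + (\sum_(i < (q - 1) * D) psi p k (rhoL q a (z ^+ i))) *+ q.+1.
Proof.
rewrite (bigD1 (0 : KF)) //= rhoE mul0r raddf0 psi0; congr (1 + _).
pose f := fun u : K => psi p k (rhoL q a u).
have inj : {in [set: 'I_N] &, injective (fun i : 'I_N => (z ^+ i : KF))}.
  move=> i j _ _ /eqP; rewrite (eq_prim_root_expr hz) !modn_small // => /eqP h.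
  exact: val_inj.
transitivity (\sum_(u in [set (z ^+ (nat_of_ord i) : KF) | i : 'I_N]) f u).
  apply: eq_bigl => u; apply/idP/imsetP.
    move=> nu; have [i hi] := prim_rootP hz (unitN nu).
    by exists i.
  by case=> i _ ->; rewrite expf_neq0 // z_ne0.
rewrite big_imset /=; last first.
  move=> i j _ _ /eqP; rewrite (eq_prim_root_expr hz) !modn_small // => /eqP h.
  exact: val_inj.
have hN : N = (q.+1 * ((q - 1) * D))%N by rewrite hD q_sq; ring.
rewrite -(big_mkord xpredT (fun i => f (z ^+ i))) hN big_mkord.
apply: (@periodic_sum _ q.+1 ((q - 1) * D) (fun i => f (z ^+ i))) => i; rewrite /f exprD mulrC mulnC.
rewrite rho_scale ?zD_fix // Nm_zD.
have -> : (D * (q - 1) * q.+1 = N)%N by rewrite hD q_sq; ring.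
by rewrite (prim_expr_order hz) mul1r.
Qed.


Lemma D_gt0 : (0 < D)%N.
Proof. by move: N_gt0; rewrite hD muln_gt0 => /andP []. Qed.

Lemma exists_c0 : exists c0 : K, [/\ c0 != 0, fp p (k * 2) c0 = c0 & Nm c0 = -1].
Proof.
case: (even_prime hp) => [p2|podd].
  exists 1; split; [exact: oner_neq0 | by rewrite rmorph1 | ].
  rewrite /Nm rmorph1 mulr1; apply/eqP; rewrite -addr_eq0.
  have h2 := pcharf0 chK; rewrite p2 in h2.
  by rewrite -[1 + 1]/(2%:R : K) h2.
have qodd : odd q by rewrite oddX podd orbT.
have o1 : odd (q - 1) = false.
  have : odd (q - 1 + 1) by rewrite subnK // ltnW // q_gt1.
  by rewrite addn1 /= => /negbTE.
set h := ((q - 1)./2)%N.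
have hq : (q - 1 = h.*2)%N by rewrite -[in LHS](odd_double_half (q - 1)) o1 add0n.
have h0 : (0 < h)%N.
  have q3 : (2 < q)%N.
    have := q_gt1; rewrite leq_eqVlt => /orP [/eqP q2|//].
    by move: qodd; rewrite -q2.
  rewrite lt0n; apply/eqP => h0; move: hq; rewrite h0 /=; lia.
exists (z ^+ (D * h)); split; [by rewrite expf_neq0 // z_ne0 | exact: zD_fix | ].
rewrite Nm_zD; set e := z ^+ _.
have e2 : e ^+ 2 = 1.
  rewrite -exprM.
  have -> : (D * h * q.+1 * 2 = N)%N by rewrite hD q_sq hq -muln2; ring.
  exact: prim_expr_order hz.
have e1 : e != 1.
  rewrite /e -(prim_order_dvd hz); apply/negP => /dvdn_leq.
  have D0 := D_gt0.
  rewrite !muln_gt0 D0 h0 /= => /(_ isT).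
  rewrite hD q_sq hq -muln2; nia.
by move/eqP: e2; rewrite sqrf_eq1 (negbTE e1) /= => /eqP.
Qed.

Lemma c_rad : fp p k (z ^+ D) + z ^+ D != 0.
Proof.
set c := z ^+ D; apply/negP => /eqP h0.
have cn : c != 0 by rewrite expf_neq0 // z_ne0.
have hcq : c ^+ q = - c by apply/eqP; rewrite -addr_eq0; apply/eqP; exact: h0.
have h1 : c ^+ (q - 1) = -1.
  apply: (mulIf cn); rewrite -exprSr subn1 prednK ?hcq ?mulN1r //.
  exact: ltnW q_gt1.
have h2 : z ^+ (D * ((q - 1) * 2)) = 1 by rewrite exprM exprM h1 sqrrN expr1n.
move: h2; move/eqP; rewrite -(prim_order_dvd hz) => /dvdn_leq.
have D0 := D_gt0; have q1 := q_gt1.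
have -> : (0 < D * ((q - 1) * 2))%N by rewrite !muln_gt0 D0 /=; lia.
move=> /(_ isT); rewrite hD q_sq; nia.
Qed.

Lemma S_sq : (\sum_(u : KF) psi p k (rhoL q a u)) ^+ 2 =
  ((q ^ (2 * n)) * (q ^ (2 * \dim (kerLL q a))))%:R.
Proof.
have [c0 [c0n c0f c0N]] := exists_c0.
set S := \sum_(u : KF) _.
have hS1 : S = \sum_(v : KF) psi p k (- rhoL q a v).
  rewrite /S (reindex_inj (mulfI (c0n : (c0 : KF) != 0))) /=.
  by apply: eq_bigr => v _; rewrite rho_scale // c0N mulN1r.
have hS2 : S * S = \sum_(v : KF) \sum_(w : KF)
    psi p k (rhoL q a w) * psi p k (Bf v w).
  rewrite {1}hS1 mulr_suml; apply: eq_bigr => v _; rewrite /S mulr_sumr.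
  rewrite (reindex_inj (addrI (v : KF))) /=; apply: eq_bigr => w _.
  rewrite -psiD ?rmorphN /= ?rho_fix // rhoD.
  have -> : - rhoL q a v + (rhoL q a v + rhoL q a w + Bf v w) = rhoL q a w + Bf v w.
    by ring.
  by rewrite psiD ?rho_fix ?Bf_fix.
rewrite expr2 hS2 exchange_big /=.
under eq_bigr => w _ do rewrite -mulr_sumr char_sum.
rewrite (bigID (fun w : KF => gL (fp p k w) == 0)) /= [X in _ + X]big1 ?addr0; last first.
  by move=> w /negbTE ->; rewrite mulr0.
have zf := zD_fix 1; rewrite muln1 in zf.
transitivity (\sum_(w : KF | gL (fp p k w) == 0) (#|KF|%:R : algC)).
  apply: eq_bigr => w hw; rewrite hw (rho_rad zf c_rad) ?psi0 ?mul1r //.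
  exact/eqP.
rewrite sumr_const -mulrnA cardK; congr (_ %:R); congr (_ * _)%N.
rewrite -card_rad; apply: eq_card => w; by rewrite inE.
Qed.


Lemma final_gen : \sum_(u : KF) psi p k (rhoL q a u) =
  (-1) ^+ (n - \dim (kerLL q a)) * ((q ^ (2 * n - (n - \dim (kerLL q a))))%N)%:R.
Proof.
have hsq0 := S_sq.
set S := \sum_(u : KF) _ in hsq0 *.
set d := \dim (kerLL q a) in hsq0 *.
have dn : (d <= n)%N by rewrite -hdim; exact: dimvS (subvf _).
have -> : (2 * n - (n - d) = n + d)%N by lia.
have -> : (-1) ^+ (n - d) = (-1) ^+ (n + d) :> algC.
  have -> : (n + d = (n - d) + 2 * d)%N by lia.
  by rewrite exprD exprM sqrrN !expr1n mulr1.
set m := (n + d)%N.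
set Q : algC := ((q ^ m)%N)%:R.
have hsq : S ^+ 2 = Q ^+ 2.
  rewrite hsq0 /Q -natrX; congr (_ %:R); rewrite -expnD.
  have -> : (2 * n + 2 * d = m * 2)%N by rewrite /m; lia.
  by rewrite expnM.
have key : S != - ((-1) ^+ m * Q).
  apply/negP => /eqP hS.
  have [X [hX eX]] : exists X, X \in Aint /\ S = 1 + X *+ q.+1.
    exists (\sum_(i < (q - 1) * D) psi p k (rhoL q a (z ^+ i))); split.
      by rewrite rpred_sum // => i _; exact: psi_Aint.
    exact: S_dec.
  set w : algC := - (q%:R).
  have hw : (-1) ^+ m * Q = w ^+ m.
    by rewrite /w /Q [RHS]exprNn -natrX.
  set Y := \sum_(i < m) w ^+ i.
  have hY : w ^+ m = 1 + (w - 1) * Y by rewrite -subrX1 addrC subrK.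
  have YZ : Y \in Num.int.
    by rewrite rpred_sum // => i _; rewrite rpredX // rpredN natr_int.
  set Zv := Y - X.
  have hZ : (q.+1)%:R * Zv = 2.
    move: hS; rewrite hw hY eX /w -[X *+ _]mulr_natr => h.
    have : (q.+1)%:R * Zv - 2 = (- (1 + (- q%:R - 1) * Y)) - (1 + X * (q.+1)%:R).
      by rewrite /Zv -addn1 natrD; ring.
    by rewrite -h subrr => /eqP; rewrite subr_eq0 => /eqP.
  have ZA : Zv \in Aint by rewrite rpredB // Aint_Cint.
  have q0 : (q.+1)%:R != 0 :> algC by rewrite pnatr_eq0.
  have ZQ : Zv \in Crat.
    have -> : Zv = 2 / (q.+1)%:R by rewrite -hZ mulrAC divff // mul1r.
    by rewrite rpred_div ?rpred_nat.
  have ZI := Cint_rat_Aint ZQ ZA.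
  have Z0 : Zv != 0.
    by apply/eqP => Z0; move: hZ; rewrite Z0 mulr0 => /eqP; rewrite eq_sym pnatr_eq0.
  have h1 := norm_intr_ge1 ZI Z0.
  have e1 := congr1 (@Num.norm _ _) hZ; rewrite normrM normr_nat in e1.
  have : (q.+1)%:R <= `|(2 : algC)| by rewrite -e1 ler_peMr ?ler0n.
  rewrite normr_nat ler_nat => hq2; have := q_gt1; lia.
move: key; rewrite -signr_odd; case: (odd m) => /= key;
  move/eqP: hsq; rewrite eqf_sqr => /orP [] /eqP hS.
- by move: key; rewrite hS mulN1r opprK eqxx.
- by rewrite hS mulN1r.
- by rewrite hS mul1r.
- by move: key; rewrite hS mul1r eqxx.
Qed.

End Gen.


Lemma main_thm : \sum_(u : KF) psi p k (rhoL q a u) =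
  (-1) ^+ (n - \dim (kerLL q a)) * ((q ^ (2 * n - (n - \dim (kerLL q a))))%N)%:R.
Proof.
have [z hz] := exists_gen; have [D hD] := existsD.
exact: (final_gen hz hD).
Qed.

End Main.

Theorem theorem3p2 (F : finFieldType) (K : fieldExtType F) (p k n : nat)
    (hp : prime p) (hchar : p \in [pchar F]) (hk : (0 < k)%N) (hn : (0 < n)%N)
    (hF : #|F| = ((p ^ k) ^ 2)%N) (hdim : \dim {: K} = n)
    (a : 'I_n -> K) :
  let q := (p ^ k)%N in
  let r := (n - \dim (kerLL q a))%N in
  \sum_(u : finvect_type K) psi p k (rhoL q a u) = (-1) ^+ r * ((q ^ (2 * n - r))%N)%:R.
Proof. exact: (main_thm hp hchar hk hn hF hdim a). Qed.
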